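(* Let $G$ be a periodic locally nilpotent group. If $G$ contains a finite contranormal subgroup, then the $\mathcal{F}$-perfect part $\mathcal{F}(G)$ of $G$ has finite index in $G$.
   Context: A subgroup $H$ of $G$ is contranormal in $G$ if its normal closure $H^G$ equals $G$. A group is $\mathcal{F}$-perfect if it has no proper subgroup of finite index. The $\mathcal{F}$-perfect part $\mathcal{F}(G)$ of $G$ is the subgroup generated by all $\mathcal{F}$-perfect subgroups of $G$; it is itself $\mathcal{F}$-perfect and is the largest $\mathcal{F}$-perfect subgroup of $G$. *)

(* Defs.v *)
From Stdlib Require Import List Arith.

Record group := Group {
  carrier :> Type;
  gmul : carrier -> carrier -> carrier;
  ginv : carrier -> carrier;
  gone : carrier;
  gmulA : forall x y z, gmul x (gmul y z) = gmul (gmul x y) z;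
  gmul1l : forall x, gmul gone x = x;
  gmulVl : forall x, gmul (ginv x) x = gone
}.

Section GroupDefs.
Variable G : group.

Definition gsubset := G -> Prop.

Definition whole : gsubset := fun _ => True.

Definition is_subgroup (H : gsubset) : Prop :=
  H (gone G) /\ (forall x y, H x -> H y -> H (gmul G x (ginv G y))).

Definition included (A B : gsubset) : Prop := forall x, A x -> B x.

Definition generated (A : gsubset) : gsubset :=
  fun x => forall K, is_subgroup K -> included A K -> K x.

Fixpoint gpow (x : G) (n : nat) : G :=
  match n with 0 => gone G | S m => gmul G (gpow x m) x end.

Definition gconj (x g : G) : G := gmul G (gmul G (ginv G g) x) g.

Definition gcomm (a b : G) : G :=
  gmul G (gmul G (gmul G (ginv G a) (ginv G b)) a) b.

Definition normal_closure (H : gsubset) : gsubset :=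
  generated (fun x => exists h g, H h /\ x = gconj h g).

Definition contranormal (H : gsubset) : Prop :=
  is_subgroup H /\ forall x, normal_closure H x.

Definition finite_set (A : gsubset) : Prop :=
  exists l : list G, forall x, A x -> In x l.

Definition finite_index (K H : gsubset) : Prop :=
  exists l : list G, (forall t, In t l -> H t) /\
    forall h, H h -> exists t, In t l /\ K (gmul G (ginv G t) h).

Definition F_perfect (H : gsubset) : Prop :=
  is_subgroup H /\
  forall K, is_subgroup K -> included K H -> finite_index K H -> included H K.

Definition F_part : gsubset :=
  generated (fun x => exists H, F_perfect H /\ H x).

Definition periodic : Prop :=
  forall x : G, exists n, 0 < n /\ gpow x n = gone G.

(* lower central series of a subgroup H: gamma_1 = H, gamma_{i+1} = [gamma_i, H] *)
Fixpoint lower_central (H : gsubset) (n : nat) : gsubset :=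
  match n with
  | 0 => H
  | S m => generated (fun x => exists a h, lower_central H m a /\ H h /\ x = gcomm a h)
  end.

Definition nilpotent_subgroup (H : gsubset) : Prop :=
  is_subgroup H /\ exists n, forall x, lower_central H n x -> x = gone G.

Definition locally_nilpotent : Prop :=
  forall l : list G, nilpotent_subgroup (generated (fun x => In x l)).

End GroupDefs.

(* Main.v *)
Require Import Defs.
From Stdlib Require Import List Arith.
From Stdlib Require Import Lia Classical ClassicalEpsilon.

Lemma mulrV (G : group) (x : G) : gmul G x (ginv G x) = gone G.
Proof.
  rewrite <- (gmul1l G (gmul G x (ginv G x))).
  rewrite <- (gmulVl G (ginv G x)) at 1.
  rewrite <- gmulA. rewrite (gmulA G (ginv G x) x (ginv G x)).
  rewrite gmulVl, gmul1l. apply gmulVl.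
Qed.

Lemma mulr1 (G : group) (x : G) : gmul G x (gone G) = x.
Proof. rewrite <- (gmulVl G x), gmulA, mulrV. apply gmul1l. Qed.

Lemma inv_uniq (G : group) (x y : G) : gmul G x y = gone G -> ginv G x = y.
Proof.
  intro E. rewrite <- (mulr1 G (ginv G x)), <- E, gmulA, gmulVl. apply gmul1l.
Qed.

Lemma invK (G : group) (x : G) : ginv G (ginv G x) = x.
Proof. apply inv_uniq. apply gmulVl. Qed.

Lemma invM (G : group) (x y : G) :
  ginv G (gmul G x y) = gmul G (ginv G y) (ginv G x).
Proof.
  apply inv_uniq. rewrite gmulA, <- (gmulA G x y), mulrV, mulr1. apply mulrV.
Qed.

Lemma inv1 (G : group) : ginv G (gone G) = gone G.
Proof. apply inv_uniq. apply gmul1l. Qed.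

Lemma mulVK (G : group) (a x : G) : gmul G (gmul G a (ginv G x)) x = a.
Proof. rewrite <- gmulA, gmulVl. apply mulr1. Qed.

Lemma mulKV (G : group) (a x : G) : gmul G (gmul G a x) (ginv G x) = a.
Proof. rewrite <- gmulA, mulrV. apply mulr1. Qed.

Ltac gsimpl := unfold gconj, gcomm in *;
  repeat progress (rewrite ?invM, ?invK, ?inv1, ?gmulA, ?mulVK, ?mulKV,
     ?gmulVl, ?mulrV, ?gmul1l, ?mulr1).

Lemma sub1 (G : group) (H : gsubset G) : is_subgroup G H -> H (gone G).
Proof. intros [h _]; exact h. Qed.

Lemma subV (G : group) (H : gsubset G) x : is_subgroup G H -> H x -> H (ginv G x).
Proof.
  intros [h1 hm] hx. rewrite <- (gmul1l G (ginv G x)). auto.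
Qed.

Lemma subM (G : group) (H : gsubset G) x y : is_subgroup G H -> H x -> H y ->
  H (gmul G x y).
Proof.
  intros S hx hy. rewrite <- (invK G y). apply (proj2 S); auto. apply subV; auto.
Qed.

Lemma gen_sub (G : group) (A : gsubset G) : is_subgroup G (generated G A).
Proof.
  split.
  - intros K SK _. apply (sub1 G K SK).
  - intros x y hx hy K SK inc. apply (proj2 SK); [apply hx | apply hy]; assumption.
Qed.

Lemma gen_incl (G : group) (A : gsubset G) x : A x -> generated G A x.
Proof. intros hx K SK inc. auto. Qed.

Lemma gen_min (G : group) (A K : gsubset G) : is_subgroup G K -> included G A K ->
  forall x, generated G A x -> K x.
Proof. intros SK inc x hx. apply hx; auto. Qed.

Lemma test (G : group) (a b c : G) :
  gmul G (ginv G (gmul G a (ginv G b))) (gmul G a c) = gmul G b c.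
Proof. gsimpl. reflexivity. Qed.
Lemma lc_sub (G : group) (L : gsubset G) : is_subgroup G L ->
  forall n, is_subgroup G (lower_central G L n).
Proof. intros SL [|n]; simpl; [exact SL | apply gen_sub]. Qed.

Lemma lc_dec (G : group) (L : gsubset G) : is_subgroup G L ->
  forall n x, lower_central G L (S n) x -> lower_central G L n x.
Proof.
  intros SL n. induction n as [|n IH]; intros x hx.
  - simpl in hx. revert x hx. apply (gen_min G _ L SL).
    intros y [a [h [ha [hh ->]]]]. unfold gcomm.
    repeat apply subM; auto; apply subV; auto.
  - simpl in hx. revert x hx. apply (gen_min G _ _ (lc_sub G L SL (S n))).
    intros y [a [h [ha [hh ->]]]]. simpl. apply gen_incl.
    exists a, h. split; [apply IH; exact ha | auto].
Qed.

Lemma lc_L (G : group) (L : gsubset G) : is_subgroup G L ->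
  forall n x, lower_central G L n x -> L x.
Proof.
  intros SL n. induction n as [|n IH]; intros x hx; [exact hx|].
  apply IH. apply lc_dec; auto.
Qed.

Lemma lc_comm (G : group) (L : gsubset G) n a h :
  lower_central G L n a -> L h -> lower_central G L (S n) (gcomm G a h).
Proof. intros. simpl. apply gen_incl. exists a, h. auto. Qed.

Definition normal (G : group) (N : gsubset G) :=
  is_subgroup G N /\ forall x g, N x -> N (gconj G x g).

Lemma conj_hom_sub (G : group) (A : gsubset G) g : is_subgroup G A ->
  is_subgroup G (fun x => A (gconj G x g)).
Proof.
  intros SA. split.
  - replace (gconj G (gone G) g) with (gone G) by (gsimpl; reflexivity).
    apply (sub1 G A SA).
  - intros x y hx hy.
    replace (gconj G (gmul G x (ginv G y)) g)
      with (gmul G (gconj G x g) (ginv G (gconj G y g))).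
    + apply (proj2 SA); auto.
    + gsimpl. reflexivity.
Qed.

Lemma normal_all (G : group) (H N : gsubset G) :
  contranormal G H -> normal G N -> included G H N -> forall x, N x.
Proof.
  intros [_ CH] [SN NN] inc x. apply (gen_min G (fun y => exists h g, H h /\ y = gconj G h g) N SN); [|apply CH].
  intros y [h [g [hh ->]]]. apply NN. auto.
Qed.
Lemma gen_conj_closed (G : group) (S B : gsubset G) : is_subgroup G B ->
  (forall g, S g -> S (ginv G g)) ->
  (forall g x, S g -> B x -> B (gconj G x g)) ->
  forall g x, generated G S g -> B x -> B (gconj G x g).
Proof.
  intros SB SV SC g x hg.
  assert (CS : is_subgroup G (fun g => forall x, B x -> B (gconj G x g) /\ B (gconj G x (ginv G g)))).
  { split.
    - intros y hy. replace (gconj G y (gone G)) with y by (gsimpl; reflexivity).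
      replace (gconj G y (ginv G (gone G))) with y by (gsimpl; reflexivity). auto.
    - intros a b ha hb y hy. split.
      + replace (gconj G y (gmul G a (ginv G b))) with (gconj G (gconj G y a) (ginv G b))
          by (gsimpl; reflexivity).
        apply hb, ha, hy.
      + replace (gconj G y (ginv G (gmul G a (ginv G b)))) with (gconj G (gconj G y b) (ginv G a))
          by (gsimpl; reflexivity).
        apply ha, hb, hy. }
  revert x. apply (gen_min G S _ CS); auto.
  intros a ha y hy. split; auto.
Qed.

Lemma gen_conj_elem (G : group) (T B : gsubset G) g : is_subgroup G B ->
  (forall x, T x -> B (gconj G x g)) -> forall x, generated G T x -> B (gconj G x g).
Proof.
  intros SB hT x hx. apply (gen_min G T (fun x => B (gconj G x g))); auto.
  apply conj_hom_sub; auto.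
Qed.

Definition Agen (G : group) (H N L : gsubset G) i :=
  generated G (fun x => H x \/ N x \/ lower_central G L i x).

Lemma Agen_normal (G : group) (H N L : gsubset G) i :
  is_subgroup G H -> normal G N -> is_subgroup G L -> included G H L ->
  (forall g, Agen G H N L i g) -> normal G (Agen G H N L (S i)).
Proof.
  intros SH [SN NN] SL HL Aall. split; [apply gen_sub|].
  pose proof (lc_sub G L SL) as SLC.
  set (B := Agen G H N L (S i)).
  assert (SB : is_subgroup G B) by apply gen_sub.
  assert (Bin : forall y, H y \/ N y \/ lower_central G L (S i) y -> B y)
    by (intros; apply gen_incl; auto).
  assert (KL : forall g x, L g -> lower_central G L (S i) x -> B (gconj G x g)).
  { intros g0 x0 hg hx0.
    replace (gconj G x0 g0) with (gmul G x0 (gcomm G x0 g0)) by (gsimpl; reflexivity).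
    apply subM; auto. apply Bin; right; right.
    apply lc_dec; auto. apply lc_comm; auto. }
  intros x g0 hx.
  apply (gen_conj_closed G (fun x => H x \/ N x \/ lower_central G L i x) B SB);
    [| | apply Aall | exact hx].
  - intros g [h|[h|h]]; [left|right;left|right;right]; apply subV; auto.
  - clear x hx. intros g x hg hx. revert x hx. apply gen_conj_elem; auto.
    intros x hx.
    destruct hx as [hx|[hx|hx]].
    +
      destruct hg as [hg|[hg|hg]].
      * apply Bin. left. unfold gconj. repeat apply subM; auto. apply subV; auto.
      * replace (gconj G x g) with (gmul G x (gmul G (gconj G (ginv G g) x) g))
          by (gsimpl; reflexivity).
        apply subM; auto. apply Bin; right; left. apply subM; auto. apply NN. apply subV; auto.
      * replace (gconj G x g) with (gmul G x (ginv G (gcomm G g x)))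
          by (gsimpl; reflexivity).
        apply subM; auto. apply subV; auto. apply Bin; right; right.
        apply lc_comm; auto.
    + apply Bin; right; left; auto.
    + destruct hg as [hg|[hg|hg]].
      * apply KL; auto.
      * replace (gconj G x g) with (gmul G x (gmul G (gconj G (ginv G g) x) g))
          by (gsimpl; reflexivity).
        apply subM; auto. apply Bin; right; left. apply subM; auto. apply NN. apply subV; auto.
      * apply KL; auto. apply (lc_L G L SL i); auto.
Qed.
Lemma HN_sub (G : group) (H N : gsubset G) : is_subgroup G H -> normal G N ->
  is_subgroup G (fun x => exists h, H h /\ N (gmul G (ginv G h) x)).
Proof.
  intros SH [SN NN]. split.
  - exists (gone G). split; [apply sub1; auto|]. gsimpl. apply sub1; auto.
  - intros x y [h1 [hh1 n1]] [h2 [hh2 n2]].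
    exists (gmul G h1 (ginv G h2)). split; [apply (proj2 SH); auto|].
    replace (gmul G (ginv G (gmul G h1 (ginv G h2))) (gmul G x (ginv G y)))
      with (gconj G (gmul G (gmul G (ginv G h1) x) (ginv G (gmul G (ginv G h2) y))) (ginv G h2))
      by (gsimpl; reflexivity).
    apply NN. apply (proj2 SN); auto.
Qed.

Lemma key (G : group) (H N L : gsubset G) :
  is_subgroup G H -> contranormal G H -> normal G N -> is_subgroup G L ->
  included G H L -> (forall g, exists t, L t /\ N (gmul G (ginv G t) g)) ->
  (exists n, forall x, lower_central G L n x -> x = gone G) ->
  forall g, exists h, H h /\ N (gmul G (ginv G h) g).
Proof.
  intros SH CH NN SL HL cov [n Hn].
  assert (All : forall i g, Agen G H N L i g).
  { intro i. induction i as [|i IH]; intro g.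
    - destruct (cov g) as [t [ht hn]].
      replace g with (gmul G t (gmul G (ginv G t) g)) by (gsimpl; reflexivity).
      apply subM; [apply gen_sub| |]; apply gen_incl; simpl; auto.
    - apply (normal_all G H); auto.
      + apply Agen_normal; auto.
      + intros x hx. apply gen_incl. auto. }
  intro g. pose proof (All n g) as A.
  revert g A. apply (gen_min G _ _ (HN_sub G H N SH NN)).
  intros x [hx|[hx|hx]].
  - exists x. split; auto. gsimpl. apply sub1, NN.
  - exists (gone G). split; [apply sub1; auto|]. gsimpl. auto.
  - rewrite (Hn x hx). exists (gone G). split; [apply sub1; auto|]. gsimpl. apply sub1, NN.
Qed.
Definition fi (G : group) (K : gsubset G) :=
  exists l : list G, forall g, exists t, In t l /\ K (gmul G (ginv G t) g).

Lemma fi_mono (G : group) (K K' : gsubset G) : (forall x, K x -> K' x) -> fi G K -> fi G K'.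
Proof.
  intros inc [l hl]. exists l. intro g. destruct (hl g) as [t [ht hk]]. eauto.
Qed.

Lemma fi_inter (G : group) (K1 K2 K3 : gsubset G) : is_subgroup G K1 -> is_subgroup G K2 ->
  (forall x, K1 x -> K2 x -> K3 x) -> fi G K1 -> fi G K2 -> fi G K3.
Proof.
  intros S1 S2 inc [l1 h1] [l2 h2].
  set (f := fun t1 t2 => epsilon (inhabits (gone G))
       (fun g => K1 (gmul G (ginv G t1) g) /\ K2 (gmul G (ginv G t2) g))).
  exists (flat_map (fun t1 => map (fun t2 => f t1 t2) l2) l1).
  intro g. destruct (h1 g) as [t1 [i1 k1]]. destruct (h2 g) as [t2 [i2 k2]].
  assert (E : exists g', K1 (gmul G (ginv G t1) g') /\ K2 (gmul G (ginv G t2) g')) by eauto.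
  pose proof (@epsilon_spec G (inhabits (gone G)) _ E) as [e1 e2].
  fold (f t1 t2) in e1, e2.
  exists (f t1 t2). split.
  - apply in_flat_map. exists t1. split; auto. apply in_map_iff. eauto.
  - apply inc.
    + replace (gmul G (ginv G (f t1 t2)) g) with
        (gmul G (ginv G (gmul G (ginv G t1) (f t1 t2))) (gmul G (ginv G t1) g))
        by (gsimpl; reflexivity).
      apply subM; auto. apply subV; auto.
    + replace (gmul G (ginv G (f t1 t2)) g) with
        (gmul G (ginv G (gmul G (ginv G t2) (f t1 t2))) (gmul G (ginv G t2) g))
        by (gsimpl; reflexivity).
      apply subM; auto. apply subV; auto.
Qed.

Lemma fi_conj (G : group) (K : gsubset G) t : fi G K -> fi G (fun x => K (gconj G x t)).
Proof.
  intros [l hl]. exists (map (fun u => gmul G (gmul G t u) (ginv G t)) l).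
  intro g. destruct (hl (gconj G g t)) as [u [iu ku]].
  exists (gmul G (gmul G t u) (ginv G t)). split; [apply in_map_iff; eauto|].
  replace (gconj G (gmul G (ginv G (gmul G (gmul G t u) (ginv G t))) g) t)
    with (gmul G (ginv G u) (gconj G g t)) by (gsimpl; reflexivity).
  exact ku.
Qed.

Definition Pl (G : group) (K : gsubset G) (l : list G) : gsubset G :=
  fun x => forall t, In t l -> K (gconj G x t).

Lemma Pl_sub (G : group) (K : gsubset G) l : is_subgroup G K -> is_subgroup G (Pl G K l).
Proof.
  intros SK. split.
  - intros t _. apply (proj1 (conj_hom_sub G K t SK)).
  - intros x y hx hy t ht. apply (proj2 (conj_hom_sub G K t SK)); auto.
Qed.

Lemma fi_Pl (G : group) (K : gsubset G) : is_subgroup G K -> fi G K -> forall l, fi G (Pl G K l).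
Proof.
  intros SK FK l. induction l as [|a l IH].
  - exists (gone G :: nil). intro g. exists (gone G). split; [left; auto|].
    intros t [].
  - apply (fi_inter G (fun x => K (gconj G x a)) (Pl G K l)).
    + apply conj_hom_sub; auto.
    + apply Pl_sub; auto.
    + intros x h1 h2 t [<-|ht]; auto.
    + apply fi_conj; auto.
    + exact IH.
Qed.

Definition core (G : group) (K : gsubset G) : gsubset G :=
  fun x => forall y, K (gconj G x y).

Lemma core_normal (G : group) (K : gsubset G) : is_subgroup G K -> normal G (core G K).
Proof.
  intros SK. split.
  - split.
    + intros y. apply (proj1 (conj_hom_sub G K y SK)).
    + intros x z hx hz y. apply (proj2 (conj_hom_sub G K y SK)); auto.
  - intros x g hx y.
    replace (gconj G (gconj G x g) y) with (gconj G x (gmul G g y)) by (gsimpl; reflexivity).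
    apply hx.
Qed.

Lemma fi_core (G : group) (K : gsubset G) : is_subgroup G K -> fi G K -> fi G (core G K).
Proof.
  intros SK FK. pose proof FK as [l hl].
  apply (fi_mono G (Pl G K l)); [| apply fi_Pl; auto].
  intros x hx y. destruct (hl y) as [t [it kt]].
  replace (gconj G x y) with (gconj G (gconj G x t) (gmul G (ginv G t) y))
    by (gsimpl; reflexivity).
  unfold gconj at 1. apply subM; auto. apply subM; auto. apply subV; auto.
Qed.
Lemma lemA (G : group) (H : gsubset G) (lH : list G) : is_subgroup G H ->
  (forall x, H x -> In x lH) -> contranormal G H -> locally_nilpotent G ->
  forall K, is_subgroup G K -> fi G K -> forall g, exists h, H h /\ K (gmul G (ginv G h) g).
Proof.
  intros SH inH CH LN K SK FK g.
  pose proof (fi_core G K SK FK) as [l hl].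
  destruct (LN (lH ++ l)) as [SL [n Hn]].
  destruct (key G H (core G K) (generated G (fun x => In x (lH ++ l))) SH CH
    (core_normal G K SK) SL) with (g := g) as [h [hh hk]].
  - intros x hx. apply gen_incl. apply in_or_app. auto.
  - intro y. destruct (hl y) as [t [it kt]]. exists t. split; auto.
    apply gen_incl. apply in_or_app. auto.
  - exists n. exact Hn.
  - exists h. split; auto.
    pose proof (hk (gone G)) as E. unfold gconj in E. rewrite inv1, gmul1l, mulr1 in E. exact E.
Qed.

Lemma filter_mono {A} (p q : A -> bool) (s : list A) :
  (forall x, p x = true -> q x = true) -> length (filter p s) <= length (filter q s).
Proof.
  intros imp. induction s as [|a s IH]; simpl; auto.
  destruct (p a) eqn:Ep; [rewrite (imp a Ep); simpl; lia|].
  destruct (q a); simpl; lia.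
Qed.

Lemma filter_eq {A} (p q : A -> bool) (s : list A) :
  (forall x, p x = true -> q x = true) -> length (filter q s) <= length (filter p s) ->
  forall x, In x s -> q x = true -> p x = true.
Proof.
  intros imp. induction s as [|a s IH]; simpl; [tauto|].
  intros Hl x Hx Hq.
  pose proof (filter_mono p q s imp) as M.
  destruct (p a) eqn:Ep.
  - rewrite (imp a Ep) in Hl. simpl in Hl. destruct Hx as [<-|Hx]; auto. apply IH; auto. lia.
  - destruct (q a) eqn:Eq; simpl in Hl; [lia|].
    destruct Hx as [<-|Hx]; [congruence|]. apply IH; auto.
Qed.

Definition bK (G : group) (K : gsubset G) (x : G) : bool :=
  if excluded_middle_informative (K x) then true else false.

Lemma bK_iff (G : group) (K : gsubset G) x : bK G K x = true <-> K x.
Proof.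
  unfold bK. destruct (excluded_middle_informative (K x)); split; auto; congruence.
Qed.

Definition good (G : group) (K : gsubset G) := is_subgroup G K /\ fi G K.

Lemma min_exists (G : group) (c : gsubset G -> nat) :
  forall n K, good G K -> c K <= n ->
  exists K0, good G K0 /\ forall K, good G K -> c K0 <= c K.
Proof.
  induction n as [|n IH]; intros K gK hc.
  - exists K. split; auto. intros; lia.
  - destruct (classic (exists K', good G K' /\ c K' < c K)) as [[K' [g' h']]|NE].
    + apply (IH K'); auto. lia.
    + exists K. split; auto. intros K' g'.
      destruct (le_gt_dec (c K) (c K')); auto. exfalso. apply NE. eauto.
Qed.

Theorem lemma3p3 (G : group) :
  periodic G -> locally_nilpotent G ->
  (exists H : gsubset G, is_subgroup G H /\ finite_set G H /\ contranormal G H) ->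
  finite_index G (F_part G) (whole G).
Proof.
  intros _ LN [H [SH [[lH inH] CH]]].
  set (c := fun K : gsubset G => length (filter (bK G K) lH)).
  destruct (min_exists G c (c (whole G)) (whole G)) as [K0 [[S0 F0] M0]]; auto.
  { split.
    - split; unfold whole; auto.
    - exists (gone G :: nil). intro g. exists (gone G). split; [left; auto| exact I]. }
  assert (Min : forall K, good G K -> forall x, K0 x -> K x).
  { intros K [SK FK] k0 hk0.
    set (K1 := fun x => K x /\ K0 x).
    assert (S1 : is_subgroup G K1).
    { split.
      - split; [apply (sub1 G K SK) | apply (sub1 G K0 S0)].
      - intros x y [a1 a2] [b1 b2]. split; [apply (proj2 SK) | apply (proj2 S0)]; auto. }
    assert (F1 : fi G K1) by (apply (fi_inter G K K0); auto; intros; split; auto).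
    assert (E : forall x, In x lH -> K0 x -> K1 x).
    { intros x ix hx. apply bK_iff.
      apply (filter_eq (bK G K1) (bK G K0) lH).
      - intros y hy. apply bK_iff. apply bK_iff in hy. destruct hy; auto.
      - apply M0. split; auto.
      - exact ix.
      - apply bK_iff; auto. }
    destruct (lemA G H lH SH inH CH LN K1 S1 F1 k0) as [h [hh [k1 k2]]].
    assert (K0 h).
    { replace h with (gmul G k0 (ginv G (gmul G (ginv G h) k0))) by (gsimpl; reflexivity).
      apply subM; auto. apply subV; auto. }
    destruct (E h (inH h hh) H0) as [kh _].
    replace k0 with (gmul G h (gmul G (ginv G h) k0)) by (gsimpl; reflexivity).
    apply subM; auto. }
  assert (FP : F_perfect G K0).
  { split; auto. intros K SK inc [l1 [_ hl1]] x hx.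
    apply (Min K); auto. split; auto.
    destruct F0 as [l0 hl0].
    exists (flat_map (fun t => map (fun s => gmul G t s) l1) l0).
    intro g. destruct (hl0 g) as [t [it kt]].
    destruct (hl1 _ kt) as [s [is ks]].
    exists (gmul G t s). split.
    - apply in_flat_map. exists t. split; auto. apply in_map_iff. eauto.
    - replace (gmul G (ginv G (gmul G t s)) g) with
        (gmul G (ginv G s) (gmul G (ginv G t) g)) by (gsimpl; reflexivity).
      exact ks. }
  destruct F0 as [l0 hl0]. exists l0. split; [intros; exact I|].
  intros g _. destruct (hl0 g) as [t [it kt]]. exists t. split; auto.
  apply gen_incl. exists K0. split; auto.
Qed.
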